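(* Let $n\in(0,1)$, let $I=(0,\infty)$ and $\lambda(z)=z^{-n}$, and fix a sign $\pm$. Then there exists $c>0$ with $8c^2(1\pm c^{-n})=n(1-n)$, and for every such $c$ and every $b\in\mathbb{R}$ the Legendre curve $\gamma_{\{b,c\}}(s)=(b,s,c)$ in $\tilde M(1-\lambda^2,2(1\pm\lambda))$ is proper biharmonic.
   Context: Definition of $\tilde M(1-\lambda^2,2(1\pm\lambda))$: Let $\lambda:I\to\mathbb{R}$ be a non-constant positive smooth function on an open interval $I$, $\lambda'=d\lambda/dz$. On $\tilde M^3=\mathbb{R}^2\times I\subset\mathbb{R}^3$ with coordinates $(x,y,z)$ consider the vector fields $e_1=\partial_x$, $e_2=\partial_y$, $e_3=(\pm 2y+f(z))\partial_x+\big(2\lambda x-\frac{\lambda'}{2\lambda}y+h(z)\big)\partial_y+\partial_z$, where $f,h$ are arbitrary smooth functions of $z$. Let $g$ be the Riemannian metric with $g(e_i,e_j)=\delta_{ij}$, $\xi=e_1$, $\eta$ the $1$-form dual to $e_1$, and $\phi$ the $(1,1)$-tensor with $\phi e_1=0$, $\phi e_2=\pm e_3$, $\phi e_3=\mp e_2$ (all double signs correspond to the sign in $\pm 2y$). This is a contact metric manifold which is a generalized $(\kappa,\mu)$-manifold with $\kappa=1-\lambda^2$, $\mu=2(1\pm\lambda)$. A curve parametrized by arclength is Legendre if $\eta(\gamma')=0$. A curve (isometric immersion) is biharmonic if its bitension field $\tau_2=-\Delta\tau+\mathrm{trace}\,\tilde R(\tau,d\gamma)d\gamma$ vanishes, equivalently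 $\tilde\nabla_T\tilde\nabla_T\tilde\nabla_T T+\tilde R(\tilde\nabla_T T,T)T=0$ for the unit tangent $T$, with $\tilde R(X,Y)=[\tilde\nabla_X,\tilde\nabla_Y]-\tilde\nabla_{[X,Y]}$; it is proper biharmonic if it is biharmonic and not a geodesic. *)

(* Defs.v *)
From Stdlib Require Import Reals Lra ClassicalEpsilon.
Open Scope R_scope.

Definition deriv (f : R -> R) (x : R) : R :=
  epsilon (inhabits 0) (fun l => derivable_pt_lim f x l).

Definition smooth_on (U : R -> Prop) (f : R -> R) : Prop :=
  exists F : nat -> R -> R,
    F 0%nat = f /\
    forall (k : nat) (x : R), U x -> derivable_pt_lim (F k) x (F (S k) x).

(** Points of R^3 are coordinate functions p : nat -> R with
    p 0 = x, p 1 = y, p 2 = z; vectors likewise (components 0,1,2). *)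
Definition sum3 (F : nat -> R) : R := F 0%nat + F 1%nat + F 2%nat.
Definition delta (i j : nat) : R := if Nat.eqb i j then 1 else 0.

Definition upd (p : nat -> R) (a : nat) (t : R) : nat -> R :=
  fun k => if Nat.eqb k a then t else p k.

Definition pd (F : (nat -> R) -> R) (a : nat) (p : nat -> R) : R :=
  deriv (fun t => F (upd p a t)) (p a).

(** The manifold  M~ = R^2 x I,  I = (0, +oo). *)
Definition inM (p : nat -> R) : Prop := 0 < p 2%nat.

Definition lam (n z : R) : R := Rpower z (- n).
Definition dlam (n z : R) : R := deriv (lam n) z.

(** Orthonormal frame: frame n eps f h p a i = a-th coordinate component of
    e_(i+1) at p (i = 0,1,2).  eps = +1 / -1 encodes the double sign. *)
Definition frame (n eps : R) (f h : R -> R) (p : nat -> R) (a i : nat) : R :=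
  let x := p 0%nat in let y := p 1%nat in let z := p 2%nat in
  match i, a with
  | 0%nat, 0%nat => 1
  | 1%nat, 1%nat => 1
  | 2%nat, 0%nat => eps * 2 * y + f z
  | 2%nat, 1%nat => 2 * lam n z * x - dlam n z / (2 * lam n z) * y + h z
  | 2%nat, 2%nat => 1
  | _, _ => 0
  end.

Definition metric := (nat -> R) -> nat -> nat -> R.

Definition Gam (g ginv : metric) (p : nat -> R) (k i j : nat) : R :=
  / 2 * sum3 (fun l => ginv p k l *
     (pd (fun q => g q j l) i p + pd (fun q => g q i l) j p
      - pd (fun q => g q i j) l p)).

(** Curvature components: R(d_i,d_j)d_k = sum_l Riem l i j k d_l, where
    R(X,Y) = [nabla_X, nabla_Y] - nabla_[X,Y]. *)
Definition Riem (g ginv : metric) (p : nat -> R) (l i j k : nat) : R :=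
  pd (fun q => Gam g ginv q l j k) i p - pd (fun q => Gam g ginv q l i k) j p
  + sum3 (fun m => Gam g ginv p l i m * Gam g ginv p m j k
                   - Gam g ginv p l j m * Gam g ginv p m i k).

Definition vel (gam : R -> nat -> R) (s : R) (a : nat) : R :=
  deriv (fun t => gam t a) s.

Definition covD (g ginv : metric) (gam : R -> nat -> R) (V : R -> nat -> R)
  (s : R) (k : nat) : R :=
  deriv (fun t => V t k) s
  + sum3 (fun i => sum3 (fun j => Gam g ginv (gam s) k i j * vel gam s i * V s j)).

Definition tension (g ginv : metric) (gam : R -> nat -> R) : R -> nat -> R :=
  covD g ginv gam (vel gam).

Definition bitension (g ginv : metric) (gam : R -> nat -> R) (s : R) (l : nat) : R :=
  covD g ginv gam (covD g ginv gam (tension g ginv gam)) s l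
  + sum3 (fun i => sum3 (fun j => sum3 (fun k =>
      Riem g ginv (gam s) l i j k * tension g ginv gam s i
        * vel gam s j * vel gam s k))).

Definition biharmonic (g ginv : metric) (gam : R -> nat -> R) : Prop :=
  forall s l, (l < 3)%nat -> bitension g ginv gam s l = 0.

Definition geodesic (g ginv : metric) (gam : R -> nat -> R) : Prop :=
  forall s l, (l < 3)%nat -> tension g ginv gam s l = 0.

Definition proper_biharmonic (g ginv : metric) (gam : R -> nat -> R) : Prop :=
  biharmonic g ginv gam /\ ~ geodesic g ginv gam.

Definition gdot (g : metric) (p : nat -> R) (X Y : nat -> R) : R :=
  sum3 (fun a => sum3 (fun b => g p a b * X a * Y b)).

Definition unit_speed (g : metric) (gam : R -> nat -> R) : Prop :=
  forall s, gdot g (gam s) (vel gam s) (vel gam s) = 1.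

(** Legendre: eta(gamma') = 0, eta = g(., xi), xi = e_1 *)
Definition legendre (n eps : R) (f h : R -> R) (g : metric) (gam : R -> nat -> R) : Prop :=
  unit_speed g gam /\
  forall s, gdot g (gam s) (vel gam s) (fun a => frame n eps f h (gam s) a 0%nat) = 0.

Definition is_frame_metric (n eps : R) (f h : R -> R) (g ginv : metric) : Prop :=
  (forall p, inM p -> forall i j, (i < 3)%nat -> (j < 3)%nat ->
     gdot g p (fun a => frame n eps f h p a i) (fun b => frame n eps f h p b j)
     = delta i j) /\
  (forall p, inM p -> forall a c, (a < 3)%nat -> (c < 3)%nat ->
     sum3 (fun b => g p a b * ginv p b c) = delta a c).

Definition gamma_bc (b c : R) (s : R) : nat -> R :=
  fun a => match a with 0%nat => b | 1%nat => s | _ => c end.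

(* Main.v *)
Require Import Defs.
From Stdlib Require Import Reals Lra Lia ClassicalEpsilon FunctionalExtensionality.
From Coquelicot Require Import Coquelicot.
Open Scope R_scope.

Arguments lam : simpl never.

Lemma deriv_unique F x l : derivable_pt_lim F x l -> deriv F x = l.
Proof.
  intros H. unfold deriv.
  apply (uniqueness_limite F x).
  - apply epsilon_spec. eauto.
  - exact H.
Qed.

Lemma dpl_local (F E : R -> R) x l r :
  0 < r -> (forall t, Rabs (t - x) < r -> F t = E t) ->
  derivable_pt_lim E x l -> derivable_pt_lim F x l.
Proof.
  intros Hr Heq H e He.
  destruct (H e He) as [d Hd].
  assert (Hm : 0 < Rmin d r) by (apply Rmin_pos; [apply cond_pos|lra]).
  exists (mkposreal _ Hm). intros hh Hh0 Hhlt. simpl in Hhlt.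
  rewrite (Heq (x + hh)), (Heq x).
  - apply Hd; auto. eapply Rlt_le_trans; [exact Hhlt|apply Rmin_l].
  - rewrite Rminus_diag, Rabs_R0; lra.
  - replace (x + hh - x) with hh by ring.
    eapply Rlt_le_trans; [exact Hhlt|apply Rmin_r].
Qed.

Lemma pd_local (F : (nat -> R) -> R) (E : R -> R) a p l r :
  0 < r -> (forall t, Rabs (t - p a) < r -> F (upd p a t) = E t) ->
  is_derive E (p a) l -> pd F a p = l.
Proof.
  intros Hr Heq H. unfold pd. apply deriv_unique.
  apply is_derive_Reals in H.
  exact (dpl_local _ E _ _ r Hr Heq H).
Qed.

Lemma deriv_ex F x : ex_derive F x -> deriv F x = Derive F x.
Proof.
  intros H. apply deriv_unique. apply is_derive_Reals. apply Derive_correct. exact H.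
Qed.

Lemma lam_der n z : 0 < z -> derivable_pt_lim (lam n) z (- n * Rpower z (- n - 1)).
Proof.
  intros Hz. unfold lam. apply (derivable_pt_lim_power z (-n) Hz).
Qed.

Lemma lam_ex n z : 0 < z -> ex_derive (lam n) z.
Proof.
  intros Hz. exists (- n * Rpower z (- n - 1)). apply is_derive_Reals. now apply lam_der.
Qed.

Lemma lam_pos n z : 0 < lam n z.
Proof. unfold lam, Rpower. apply exp_pos. Qed.

Lemma mu_eq n z : 0 < z -> dlam n z / (2 * lam n z) = - n / (2 * z).
Proof.
  intros Hz. unfold dlam. rewrite (deriv_unique _ _ _ (lam_der n z Hz)).
  replace (- n - 1) with (-n + - (1)) by ring.
  rewrite Rpower_plus, (Rpower_Ropp z 1), Rpower_1 by lra.
  pose proof (lam_pos n z) as Hl. unfold lam in Hl.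
  change (lam n z) with (Rpower z (-n)). field. split; lra.
Qed.

Section Metric.
Variables (n eps : R) (f h : R -> R) (g ginv : metric).
Hypothesis Hf : forall x, 0 < x -> ex_derive f x.
Hypothesis Hh : forall x, 0 < x -> ex_derive h x.
Hypothesis Hg : is_frame_metric n eps f h g ginv.

Definition Aq (p : nat -> R) := eps * 2 * p 1%nat + f (p 2%nat).
Definition Bq (p : nat -> R) := 2 * lam n (p 2%nat) * p 0%nat + n / (2 * p 2%nat) * p 1%nat + h (p 2%nat).
Definition Gm (p : nat -> R) (a b : nat) : R :=
  match a, b with
  | 0, 0 => 1 | 1, 1 => 1
  | 0, 2 | 2, 0 => - Aq p
  | 1, 2 | 2, 1 => - Bq p
  | 2, 2 => 1 + Aq p ^ 2 + Bq p ^ 2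
  | _, _ => 0 end.
Definition Gi (p : nat -> R) (a b : nat) : R :=
  match a, b with
  | 0, 0 => 1 + Aq p ^ 2
  | 0, 1 | 1, 0 => Aq p * Bq p
  | 0, 2 | 2, 0 => Aq p
  | 1, 1 => 1 + Bq p ^ 2
  | 1, 2 | 2, 1 => Bq p
  | 2, 2 => 1
  | _, _ => 0 end.
Definition dA (p : nat -> R) (r : nat) : R :=
  match r with 0 => 0 | 1 => eps * 2 | _ => Derive f (p 2%nat) end.
Definition dB (p : nat -> R) (r : nat) : R :=
  match r with 0 => 2 * lam n (p 2%nat) | 1 => n / (2 * p 2%nat)
  | _ => 2 * Derive (lam n) (p 2%nat) * p 0%nat - n / (2 * p 2%nat ^ 2) * p 1%nat + Derive h (p 2%nat) end.
Definition DG (p : nat -> R) (a b r : nat) : R :=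
  match a, b with
  | 0, 2 | 2, 0 => - dA p r
  | 1, 2 | 2, 1 => - dB p r
  | 2, 2 => 2 * Aq p * dA p r + 2 * Bq p * dB p r
  | _, _ => 0 end.
Definition GamE (p : nat -> R) (k i j : nat) : R :=
  / 2 * sum3 (fun l => Gi p k l * (DG p j l i + DG p i l j - DG p i j l)).

Lemma lt3 (a : nat) : (a < 3)%nat -> a = 0%nat \/ a = 1%nat \/ a = 2%nat.
Proof. lia. Qed.

Lemma g_eq p : inM p -> forall a b, (a < 3)%nat -> (b < 3)%nat -> g p a b = Gm p a b.
Proof.
  intros Hp. destruct Hg as [H1 _].
  assert (E : forall i j, (i < 3)%nat -> (j < 3)%nat ->
     gdot g p (fun a => frame n eps f h p a i) (fun b => frame n eps f h p b j) = delta i j)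
    by (intros; apply H1; auto).
  assert (HB : frame n eps f h p 1 2 = Bq p).
  { unfold frame, Bq. rewrite mu_eq by exact Hp. field. unfold inM in Hp; lra. }
  assert (HA : frame n eps f h p 0 2 = Aq p) by reflexivity.
  pose proof (E 0%nat 0%nat ltac:(lia) ltac:(lia)) as E00.
  pose proof (E 0%nat 1%nat ltac:(lia) ltac:(lia)) as E01.
  pose proof (E 0%nat 2%nat ltac:(lia) ltac:(lia)) as E02.
  pose proof (E 1%nat 0%nat ltac:(lia) ltac:(lia)) as E10.
  pose proof (E 1%nat 1%nat ltac:(lia) ltac:(lia)) as E11.
  pose proof (E 1%nat 2%nat ltac:(lia) ltac:(lia)) as E12.
  pose proof (E 2%nat 0%nat ltac:(lia) ltac:(lia)) as E20.
  pose proof (E 2%nat 1%nat ltac:(lia) ltac:(lia)) as E21.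
  pose proof (E 2%nat 2%nat ltac:(lia) ltac:(lia)) as E22.
  clear E H1.
  unfold gdot, sum3, delta in *. simpl in *.
  rewrite HA, HB in *.
  intros a b Ha Hb.
  assert (g00 : g p 0%nat 0%nat = 1) by lra.
  assert (g01 : g p 0%nat 1%nat = 0) by lra.
  assert (g10 : g p 1%nat 0%nat = 0) by lra.
  assert (g11 : g p 1%nat 1%nat = 1) by lra.
  assert (g02 : g p 0%nat 2%nat = - Aq p) by (rewrite g00, g01 in E02; lra).
  assert (g20 : g p 2%nat 0%nat = - Aq p) by (rewrite g00, g10 in E20; lra).
  assert (g12 : g p 1%nat 2%nat = - Bq p) by (rewrite g10, g11 in E12; lra).
  assert (g21 : g p 2%nat 1%nat = - Bq p) by (rewrite g01, g11 in E21; lra).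
  assert (g22 : g p 2%nat 2%nat = 1 + Aq p ^ 2 + Bq p ^ 2).
  { rewrite g00, g01, g10, g11, g02, g20, g12, g21 in E22. nra. }
  destruct (lt3 a Ha) as [ -> | [ -> | -> ] ]; destruct (lt3 b Hb) as [ -> | [ -> | -> ] ]; simpl; auto.
Qed.

Lemma gi_eq p : inM p -> forall a b, (a < 3)%nat -> (b < 3)%nat -> ginv p a b = Gi p a b.
Proof.
  intros Hp. destruct Hg as [_ H2].
  assert (E : forall a c, (a < 3)%nat -> (c < 3)%nat -> sum3 (fun b => g p a b * ginv p b c) = delta a c)
    by (intros; apply H2; auto).
  intros a c Ha Hc.
  pose proof (E 0%nat c ltac:(lia) Hc) as E0.
  pose proof (E 1%nat c ltac:(lia) Hc) as E1.
  pose proof (E 2%nat c ltac:(lia) Hc) as E2.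
  unfold sum3 in *. rewrite !(g_eq p Hp) in E0, E1, E2 by lia. simpl in E0, E1, E2.
  set (A := Aq p) in *. set (B := Bq p) in *.
  assert (X0 : ginv p 0%nat c = (1 + A^2) * delta 0%nat c + A * B * delta 1%nat c + A * delta 2%nat c)
    by (rewrite <- E0, <- E1, <- E2; ring).
  assert (X1 : ginv p 1%nat c = A * B * delta 0%nat c + (1 + B^2) * delta 1%nat c + B * delta 2%nat c)
    by (rewrite <- E0, <- E1, <- E2; ring).
  assert (X2 : ginv p 2%nat c = A * delta 0%nat c + B * delta 1%nat c + delta 2%nat c)
    by (rewrite <- E0, <- E1, <- E2; ring).
  destruct (lt3 a Ha) as [ -> | [ -> | -> ] ]; destruct (lt3 c Hc) as [ -> | [ -> | -> ] ];
    [rewrite X0|rewrite X0|rewrite X0|rewrite X1|rewrite X1|rewrite X1|rewrite X2|rewrite X2|rewrite X2];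
    unfold delta; simpl; fold A B; ring.
Qed.


Ltac dom_tac Hp :=
  repeat split;
  try (change (fun x => f x) with f; apply Hf; unfold inM in Hp; simpl; lra);
  try (change (fun x => h x) with h; apply Hh; unfold inM in Hp; simpl; lra);
  try (change (fun x => lam n x) with (lam n); apply lam_ex; unfold inM in Hp; simpl; lra);
  try (unfold inM in Hp; simpl; lra).

Ltac eq_tac Hp :=
  try change (fun x => f x) with f;
  try change (fun x => h x) with h;
  try change (fun x => lam n x) with (lam n);
  unfold Aq, Bq; unfold inM in Hp; field; lra.

Lemma pd_g p : inM p -> forall a b r, (a < 3)%nat -> (b < 3)%nat -> (r < 3)%nat ->
  pd (fun q => g q a b) r p = DG p a b r.
Proof.
  intros Hp a b r Ha Hb Hr.
  apply (pd_local _ (fun t => Gm (upd p r t) a b) _ _ _ (p 2%nat)); [exact Hp| |].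
  - intros t Ht. apply g_eq; auto. unfold inM, upd in *.
    destruct (lt3 r Hr) as [ -> | [ -> | -> ] ]; simpl; try lra.
    apply Rabs_def2 in Ht. lra.
  - destruct (lt3 a Ha) as [ -> | [ -> | -> ] ]; destruct (lt3 b Hb) as [ -> | [ -> | -> ] ];
    destruct (lt3 r Hr) as [ -> | [ -> | -> ] ];
    unfold Gm, Aq, Bq, upd, DG, dA, dB; simpl;
    auto_derive; try dom_tac Hp; try eq_tac Hp.
Qed.

Lemma Gam_eq p : inM p -> forall k i j, (k < 3)%nat -> (i < 3)%nat -> (j < 3)%nat ->
  Gam g ginv p k i j = GamE p k i j.
Proof.
  intros Hp k i j Hk Hi Hj. unfold Gam, GamE, sum3.
  rewrite !(gi_eq p Hp k) by lia.
  rewrite !(pd_g p Hp) by lia.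
  reflexivity.
Qed.

Section Curve.
Variables (b c : R).
Hypothesis Hc : 0 < c.

Lemma inM_gam t : inM (gamma_bc b c t).
Proof. unfold inM; simpl; lra. Qed.

Lemma vel_eq : vel (gamma_bc b c) = fun s a => match a with 1%nat => 1 | _ => 0 end.
Proof.
  extensionality s; extensionality a. unfold vel.
  destruct a as [|[|a]]; simpl; apply deriv_unique.
  - apply derivable_pt_lim_const.
  - apply derivable_pt_lim_id.
  - apply derivable_pt_lim_const.
Qed.

Definition TE (k : nat) (t : R) := - (n / (2 * c)) * Gi (gamma_bc b c t) k 2%nat.
Definition dTE (k : nat) : R :=
  match k with 0 => - (n / (2 * c)) * (eps * 2) | 1 => - (n / (2 * c)) * (n / (2 * c)) | _ => 0 end.

Lemma tension_eq t k : (k < 3)%nat -> tension g ginv (gamma_bc b c) t k = TE k t.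
Proof.
  intros Hk. unfold tension, covD. rewrite vel_eq. cbv beta.
  rewrite (deriv_unique _ _ 0) by apply derivable_pt_lim_const.
  unfold sum3. rewrite (Gam_eq _ (inM_gam t) k 1%nat 1%nat) by lia.
  unfold GamE, TE, sum3, DG, dB.
  destruct (lt3 k Hk) as [ -> | [ -> | -> ] ]; simpl; field; lra.
Qed.

Definition N1 (k : nat) (t : R) :=
  dTE k + sum3 (fun j => GamE (gamma_bc b c t) k 1%nat j * TE j t).

Lemma covD1_eq t k : (k < 3)%nat ->
  covD g ginv (gamma_bc b c) (tension g ginv (gamma_bc b c)) t k = N1 k t.
Proof.
  intros Hk. unfold covD at 1.
  replace (fun t0 => tension g ginv (gamma_bc b c) t0 k) with (fun t0 => TE k t0)
    by (extensionality t0; symmetry; now apply tension_eq).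
  rewrite (deriv_unique _ _ (dTE k)).
  2:{ apply is_derive_Reals. unfold TE, Gi, Aq, Bq.
      destruct (lt3 k Hk) as [ -> | [ -> | -> ] ]; simpl; auto_derive; try easy; field; lra. }
  rewrite vel_eq. unfold sum3, N1.
  rewrite !tension_eq by lia.
  rewrite !(Gam_eq _ (inM_gam t) k 1%nat) by lia.
  unfold sum3; simpl. ring.
Qed.

Lemma legendre_ok : legendre n eps f h g (gamma_bc b c).
Proof.
  split.
  - intros s. unfold gdot, sum3. rewrite vel_eq. cbv beta iota.
    rewrite (g_eq _ (inM_gam s) 1%nat 1%nat) by lia. simpl. ring.
  - intros s. unfold gdot, sum3. rewrite vel_eq. cbv beta iota. unfold frame. simpl.
    rewrite (g_eq _ (inM_gam s) 1%nat 0%nat) by lia. simpl. ring.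
Qed.

Lemma not_geo : 0 < n -> ~ geodesic g ginv (gamma_bc b c).
Proof.
  intros Hn H. specialize (H 0 2%nat ltac:(lia)).
  rewrite tension_eq in H by lia. unfold TE, Gi in H. simpl in H.
  assert (n / (2 * c) > 0) by (apply Rdiv_lt_0_compat; lra). lra.
Qed.

Hypothesis Heps : eps = 1 \/ eps = -1.
Hypothesis Hceq : 8 * c ^ 2 * (1 + eps * Rpower c (- n)) = n * (1 - n).

Ltac der_tac :=
  cbv beta iota zeta delta [N1 TE dTE GamE Gi DG dA dB Aq Bq sum3 upd gamma_bc Nat.eqb];
  auto_derive;
  first [ reflexivity |
    repeat split;
    try (change (fun x => f x) with f; apply Hf; lra);
    try (change (fun x => h x) with h; apply Hh; lra);
    try (change (fun x => lam n x) with (lam n); apply lam_ex; lra);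
    try lra ].

Ltac pdG k i j r p :=
  erewrite (pd_local (fun q => Gam g ginv q k i j) (fun t => GamE (upd p r t) k i j)
              r p _ c Hc);
  [ | intros t Ht; apply Gam_eq; [ unfold inM, upd; simpl; simpl in Ht; apply Rabs_def2 in Ht; lra | lia.. ]
    | der_tac ].

Lemma biharm s l : (l < 3)%nat -> bitension g ginv (gamma_bc b c) s l = 0.
Proof.
  intros Hl. unfold bitension. unfold covD at 1.
  replace (fun t => covD g ginv (gamma_bc b c) (tension g ginv (gamma_bc b c)) t l)
    with (fun t => N1 l t) by (extensionality t0; symmetry; now apply covD1_eq).
  rewrite vel_eq. unfold sum3.
  rewrite !covD1_eq by lia.
  rewrite !tension_eq by lia.
  destruct (lt3 l Hl) as [ -> | [ -> | -> ] ]; unfold Riem, sum3.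
  all: rewrite !(Gam_eq _ (inM_gam s)) by lia.
  all: erewrite (deriv_unique _ _ _); [ | apply is_derive_Reals; der_tac ].
  all: repeat match goal with |- context [pd (fun q => Gam g ginv q ?k 1%nat 1%nat) ?r ?p] =>
     pdG k 1%nat 1%nat r p end.
  all: repeat match goal with |- context [pd (fun q => Gam g ginv q ?k ?i 1%nat) 1%nat ?p] =>
     pdG k i 1%nat 1%nat p end.
  all: cbv beta iota zeta delta [N1 TE dTE GamE Gi DG dA dB Aq Bq sum3 upd gamma_bc Nat.eqb].
  all: try change (fun x => f x) with f; try change (fun x => h x) with h;
       try change (fun x => lam n x) with (lam n).
  all: assert (c2 : c ^ 2 <> 0) by (apply pow_nonzero; lra).
  all: assert (HL : lam n c = (n * (1 - n) / (8 * c ^ 2) - 1) * eps)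
         by (unfold lam; rewrite <- Hceq; destruct Heps as [E|E]; rewrite E; field; lra).
  all: rewrite HL.
  all: destruct Heps as [E|E]; rewrite E; field; lra.
Qed.
End Curve.

End Metric.

Lemma smooth_ex (f : R -> R) : smooth_on (fun z => 0 < z) f -> forall x, 0 < x -> ex_derive f x.
Proof.
  intros [F [HF0 HF]] x Hx. exists (F 1%nat x). apply is_derive_Reals. rewrite <- HF0. apply HF. exact Hx.
Qed.

Lemma exists_c (n eps : R) : 0 < n < 1 -> (eps = 1 \/ eps = -1) ->
  exists c, 0 < c /\ 8 * c ^ 2 * (1 + eps * Rpower c (- n)) = n * (1 - n).
Proof.
  intros Hn Heps.
  set (phi := fun x => 8 * x ^ 2 * (1 + eps * lam n x) - n * (1 - n)).
  assert (Hcont : forall a, 0 < a -> continuity_pt phi a).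
  { intros a Ha. apply derivable_continuous_pt. eexists. apply is_derive_Reals. unfold phi.
    auto_derive; [ repeat split; change (fun x => lam n x) with (lam n); apply lam_ex; lra | reflexivity ]. }
  assert (Hnn : 0 < n * (1 - n)) by (apply Rmult_lt_0_compat; lra).
  assert (Hnn4 : n * (1 - n) <= 1/4) by (pose proof (pow2_ge_0 (n - 1/2)); nra).
  assert (R1 : forall y, Rpower 1 y = 1) by (intros; unfold Rpower; rewrite ln_1, Rmult_0_r, exp_0; reflexivity).
  assert (IV : forall x y, 0 < x -> x < y -> phi x < 0 -> 0 < phi y ->
            exists c, 0 < c /\ 8 * c ^ 2 * (1 + eps * Rpower c (- n)) = n * (1 - n)).
  { intros x y Hx Hxy H1 H2.
    destruct (Ranalysis5.IVT_interv phi x y) as [z [Hz Hz0]]; auto.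
    - intros a Ha. apply Hcont. lra.
    - exists z. split; [lra|]. unfold phi, lam in Hz0. lra. }
  destruct Heps as [E|E]; rewrite E in *.
  - set (x0 := n * (1 - n) / 32).
    assert (Hx0 : 0 < x0) by (unfold x0; lra).
    assert (Hx01 : x0 < 1) by (unfold x0; lra).
    apply (IV x0 1); auto.
    + unfold phi.
      assert (HL : lam n x0 < / x0).
      { unfold lam, Rpower. rewrite <- (exp_ln x0) at 2 by lra. rewrite <- exp_Ropp.
        apply exp_increasing. assert (ln x0 < 0) by (rewrite <- ln_1; apply ln_increasing; lra). nra. }
      assert (0 < lam n x0) by apply lam_pos.
      assert (x0 ^ 2 * lam n x0 < x0).
      { apply Rmult_lt_compat_l with (r := x0) in HL; auto.
        rewrite Rinv_r in HL by lra. nra. }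
      assert (x0 ^ 2 < x0) by nra.
      unfold x0 in *. nra.
    + unfold phi, lam. rewrite R1. lra.
  - set (Y := exp (ln 2 / n)).
    assert (HY : 1 < Y).
    { unfold Y. rewrite <- exp_0. apply exp_increasing. apply Rdiv_lt_0_compat; [|lra].
      rewrite <- ln_1. apply ln_increasing; lra. }
    apply (IV 1 Y); [lra|lra| |].
    + unfold phi, lam. rewrite R1. lra.
    + unfold phi, lam, Rpower. unfold Y. rewrite ln_exp.
      replace (- n * (ln 2 / n)) with (- ln 2) by (field; lra).
      rewrite exp_Ropp, exp_ln by lra. fold Y.
      assert (1 < Y ^ 2) by nra. rewrite E. lra.
Qed.

Theorem mainTheorem2 (n eps : R) :
  0 < n < 1 -> (eps = 1 \/ eps = -1) ->
  (exists c, 0 < c /\ 8 * c ^ 2 * (1 + eps * Rpower c (- n)) = n * (1 - n)) /\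
  (forall (f h : R -> R),
     smooth_on (fun z => 0 < z) f -> smooth_on (fun z => 0 < z) h ->
     forall g ginv : metric, is_frame_metric n eps f h g ginv ->
     forall c : R, 0 < c -> 8 * c ^ 2 * (1 + eps * Rpower c (- n)) = n * (1 - n) ->
     forall b : R,
       legendre n eps f h g (gamma_bc b c) /\
       proper_biharmonic g ginv (gamma_bc b c)).
Proof.
  intros Hn Heps. split; [now apply exists_c|].
  intros f h Hf Hh g ginv Hg c Hc Hceq b.
  pose proof (smooth_ex f Hf) as Hf'. pose proof (smooth_ex h Hh) as Hh'.
  split; [eapply legendre_ok with (ginv := ginv); eauto|].
  split.
  - intros s l Hl. now apply (biharm n eps f h g ginv Hf' Hh' Hg b c Hc Heps Hceq).
  - apply (not_geo n eps f h g ginv Hf' Hh' Hg b c Hc). lra.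
Qed.
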